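(* Let $C\subset\mathbb{R}^n$ be a nonempty compact path-wise connected set and let $f:C\to\mathbb{R}$ be a continuous function satisfying the Lipschitz condition, with Lipschitz constant $$M_0=\sup\Big\{\frac{|f(y)-f(x)|}{|y-x|}\ :\ x,y\in C,\ x\neq y\Big\}<\infty .$$ Let $v=\min_{x\in C}f(x)$ be the global minimum value of $f$ on $C$. Let $C=C_1\supset C_2\supset\cdots$ be the sequence of sets produced by the granular sieving (GrS) procedure with constant $M_0$ (described in the context), where the maximal diameters $\delta_k$ of the partition pieces satisfy $\delta_k\to 0$ as $k\to\infty$. Then $$\tilde C:=\bigcap_{k=1}^{\infty}C_k\neq\emptyset\qquad\text{and}\qquad f(\tilde C)=\{v\},$$ where $f(A)=\{f(a): a\in A\}$ for $A\subset C$.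
   Context: GrS procedure with constant $M>0$ (here $M=M_0$): set $C_1=C$. Given a compact set $C_k\subset C$, choose a finite partition $\mathbb{N}_k=\{C^{(k)}_l: l=1,\dots,l_k\}$ of $C_k$, i.e. $C_k=\bigcup_{l=1}^{l_k}C^{(k)}_l$, such that: each $C^{(k)}_l$ is compact (boundaries of different pieces may overlap); the partitions become finer, in the sense that each piece $C^{(k+1)}_{l'}$ of $\mathbb{N}_{k+1}$ is either entirely contained in a piece $C^{(k)}_l$ of $\mathbb{N}_k$ or has empty intersection with the interior of $C^{(k)}_l$; and in each piece a representative point (''center'') $x^{(k)}_l\in C^{(k)}_l$ is chosen. Let $\delta_k$ be the maximal diameter of the pieces $C^{(k)}_l$, $l=1,\dots,l_k$ (diameter = maximal distance between two points of the set). Put $v_k=\min\{f(x^{(k)}_l): l=1,\dots,l_k\}$. A piece $C^{(k)}_l$ is called good if $f(x^{(k)}_l)\le v_k+\delta_k M$ and bad if $f(x^{(k)}_l)> v_k+\delta_k M$. Define $C_{k+1}$ to be the union of all good pieces of $\mathbb{N}_k$, and continue inductively. *)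

(* Defs.v *)
From HB Require Import structures.
From mathcomp Require Import all_boot all_order all_algebra.
From mathcomp Require Import all_classical all_reals all_analysis.
Set Implicit Arguments. Unset Strict Implicit. Unset Printing Implicit Defensive.
Import Order.TTheory GRing.Theory Num.Theory.
Import numFieldNormedType.Exports.
Local Open Scope classical_set_scope.
Local Open Scope ring_scope.

(* Points of R^n are row vectors 'rV[R]_n (product topology = Euclidean topology). *)

Definition edist (R : realType) (n : nat) (x y : 'rV[R]_n) : R :=
  Num.sqrt (\sum_(i < n) (x ord0 i - y ord0 i) ^+ 2).

Definition diam (R : realType) (n : nat) (A : set 'rV[R]_n) : R :=
  sup [set d | exists a b, A a /\ A b /\ d = edist a b].

Definition path_connected_set (R : realType) (n : nat) (A : set 'rV[R]_n) : Prop :=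
  forall x y, A x -> A y ->
    exists g : R -> 'rV[R]_n,
      {within `[0, 1], continuous g} /\ g 0 = x /\ g 1 = y /\ g @` `[0, 1] `<=` A.

Definition lip_quotients (R : realType) (n : nat) (C : set 'rV[R]_n)
  (f : 'rV[R]_n -> R) : set R :=
  [set q | exists x y, C x /\ C y /\ x <> y /\ q = `|f y - f x| / edist x y].

(* Data of the GrS procedure: at step k, pieces P k l for l < lk k,
   with centers c k l; Cs k is the current compact set C_k
   (indices start at 0: Cs 0 = C is the paper's C_1). *)

Definition grs_delta (R : realType) (n : nat) (lk : nat -> nat)
  (P : nat -> nat -> set 'rV[R]_n) (k : nat) : R :=
  \big[Num.max/0]_(l < lk k) diam (P k l).

Definition grs_v (R : realType) (n : nat) (f : 'rV[R]_n -> R) (lk : nat -> nat)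
  (c : nat -> nat -> 'rV[R]_n) (k : nat) : R :=
  \big[Num.min/f (c k 0%N)]_(l < lk k) f (c k l).

Definition GrS_sequence (R : realType) (n : nat) (C : set 'rV[R]_n)
  (f : 'rV[R]_n -> R) (M : R) (Cs : nat -> set 'rV[R]_n) (lk : nat -> nat)
  (P : nat -> nat -> set 'rV[R]_n) (c : nat -> nat -> 'rV[R]_n) : Prop :=
  Cs 0%N = C /\
      (forall k, Cs k = \bigcup_(l in [set l | (l < lk k)%N]) P k l) /\
      (forall k l, (l < lk k)%N -> compact (P k l)) /\
      (forall k l, (l < lk k)%N -> P k l (c k l)) /\
      (forall k l' l, (l' < lk k.+1)%N -> (l < lk k)%N ->
         P k.+1 l' `<=` P k l \/ P k.+1 l' `&` interior (P k l) = set0) /\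
      (forall k, Cs k.+1 = \bigcup_(l in [set l | (l < lk k)%N /\
                     f (c k l) <= grs_v f lk c k + grs_delta lk P k * M]) P k l).

(* Main.v *)
Require Import Defs.
From HB Require Import structures.
From mathcomp Require Import all_boot all_order all_algebra.
From mathcomp Require Import all_classical all_reals all_analysis.
From mathcomp Require Import lra.
Import Order.TTheory GRing.Theory Num.Theory.
Import numFieldNormedType.Exports.
Local Open Scope classical_set_scope.
Local Open Scope ring_scope.

Lemma coord_le {R : realType} {n : nat} (x : 'rV[R]_n) i : `|x ord0 i| <= `|x|.
Proof.
have -> : `|x| = mx_norm x by [].
rewrite mx_normrE.
exact: (le_bigmax _ (fun ij : 'I_1 * 'I_n => `|x ij.1 ij.2|) (ord0, i)).
Qed.

Lemma edist_ub (R : realType) (n : nat) (A : set 'rV[R]_n) :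
  compact A -> has_ubound [set d : R | exists a b, A a /\ A b /\ d = Defs.edist a b].
Proof.
move=> /compact_bounded [M [_ HM]].
have HB := HM (`|M| + 1) (ltr_pwDr ltr01 (ler_norm M)) .
pose B : R := `|M| + 1.
have B0 : 0 <= B by rewrite /B; have := normr_ge0 M; lra.
exists ((n%:R * (B + B) ^+ 2) + 1) => _ [a [b [Aa [Ab ->]]]].
rewrite /Defs.edist.
set S := \sum_(i < n) _.
have S0 : 0 <= S by apply: sumr_ge0 => i _; exact: sqr_ge0.
have SB : S <= n%:R * (B + B) ^+ 2.
  have -> : n%:R * (B + B) ^+ 2 = \sum_(i < n) (B + B) ^+ 2.
    by rewrite sumr_const card_ord mulr_natl.
  apply: ler_sum => i _.
  have ha := le_trans (coord_le a i) (HB a Aa).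
  have hb := le_trans (coord_le b i) (HB b Ab).
  have := ler_normB (a ord0 i) (b ord0 i).
  rewrite -/B in ha hb.
  move: (a ord0 i) (b ord0 i) ha hb => p q ha hb hpq.
  have h : `|p - q| <= B + B by apply: (le_trans hpq); lra.
  have -> : (p - q) ^+ 2 = `|p - q| ^+ 2 by rewrite real_normK ?num_real.
  have := normr_ge0 (p - q); nra.
have : Num.sqrt S <= S + 1.
  rewrite -(@ger0_norm _ (S + 1)); last lra.
  rewrite -sqrtr_sqr; apply: ler_wsqrtr; nra.
lra.
Qed.

Theorem theorem1 (R : realType) (n : nat) (C : set 'rV[R]_n) (f : 'rV[R]_n -> R)
  (M0 v : R) (Cs : nat -> set 'rV[R]_n) (lk : nat -> nat)
  (P : nat -> nat -> set 'rV[R]_n) (c : nat -> nat -> 'rV[R]_n) :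
  C !=set0 -> compact C -> path_connected_set C ->
  {within C, continuous f} ->
  has_ubound (lip_quotients C f) ->
  M0 = sup (lip_quotients C f) ->
  (exists2 x0, C x0 & f x0 = v) -> (forall x, C x -> v <= f x) ->
  GrS_sequence C f M0 Cs lk P c ->
  grs_delta lk P @ \oo --> (0 : R) ->
  (\bigcap_k Cs k) !=set0 /\ f @` (\bigcap_k Cs k) = [set v].
Proof.
move=> _ _ _ _ Hub HM0 [x0 Cx0 fx0] Hv [H0 [Hun [Hcpt [Hcen [_ Hgood]]]]] Hcvg.
have edist0 : forall x : 'rV[R]_n, Defs.edist x x = 0.
  move=> x; rewrite /Defs.edist (eq_bigr (fun _ => 0)) ?big1 ?sqrtr0 // => i _.
  by rewrite subrr expr0n.
have edist_ge0 : forall x y : 'rV[R]_n, 0 <= Defs.edist x y.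
  by move=> x y; rewrite /Defs.edist sqrtr_ge0.
have edist_gt0 : forall x y : 'rV[R]_n, x <> y -> 0 < Defs.edist x y.
  move=> x y xy; rewrite /Defs.edist sqrtr_gt0.
  have [i Hi] : exists i, x ord0 i <> y ord0 i.
    apply: contrapT => H; apply: xy; apply/rowP => i.
    by apply: contrapT => Hi; apply: H; exists i.
  rewrite (bigD1 i) //=.
  have h1 : 0 < (x ord0 i - y ord0 i) ^+ 2.
    by rewrite exprn_even_gt0 //; apply/negP; rewrite subr_eq0 => /eqP.
  have h2 : 0 <= \sum_(j < n | j != i) (x ord0 j - y ord0 j) ^+ 2.
    by apply: sumr_ge0 => j _; exact: sqr_ge0.
  lra.
have M0ge0 : 0 <= M0.
  case: (pselect (exists q, lip_quotients C f q)) => [[q Hq]|H].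
    apply: (@le_trans _ _ q).
      case: Hq => [a [b [_ [_ [_ ->]]]]].
      by rewrite divr_ge0 // edist_ge0.
    by rewrite HM0; apply: ub_le_sup.
  rewrite HM0; have -> : lip_quotients C f = set0.
    by apply/seteqP; split => // q Hq; exfalso; apply: H; exists q.
  by rewrite sup0.
have Lip : forall x y, C x -> C y -> `|f y - f x| <= M0 * Defs.edist x y.
  move=> x y Cx Cy.
  case: (pselect (x = y)) => [<-|xy].
    by rewrite subrr normr0 edist0 mulr0.
  have hq : `|f y - f x| / Defs.edist x y <= M0.
    by rewrite HM0; apply: ub_le_sup => //; exists x, y.
  by rewrite -ler_pdivrMr ?edist_gt0.
have Hdiam : forall k l a b, (l < lk k)%N -> P k l a -> P k l b ->
    Defs.edist a b <= grs_delta lk P k.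
  move=> k l a b Hl Pa Pb.
  apply: (@le_trans _ _ (diam (P k l))).
    by apply: ub_le_sup; [exact: edist_ub (Hcpt k l Hl)| exists a, b].
  exact: (le_bigmax _ (fun l : 'I_(lk k) => diam (P k l)) (Ordinal Hl)).
have Hpiece : forall k l, (l < lk k)%N -> P k l `<=` Cs k.
  by move=> k l Hl x Px; rewrite Hun; exists l.
have Hsub : forall k, Cs k `<=` C.
  elim=> [|k IH]; first by rewrite H0.
  move=> x; rewrite Hgood => -[l [Hl _] Px].
  by apply: IH; apply: (Hpiece k l Hl).
have Hcen' : forall k l, (l < lk k)%N -> C (c k l).
  by move=> k l Hl; apply: (Hsub k); apply: (Hpiece k l Hl); apply: Hcen.
have vle : forall k, (0 < lk k)%N -> v <= grs_v f lk c k.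
  move=> k Hk; rewrite /grs_v; apply: le_bigmin.
    exact: Hv (Hcen' k 0%N Hk).
  by move=> i _; apply: Hv; apply: Hcen'.
have gvle : forall k l, (l < lk k)%N -> grs_v f lk c k <= f (c k l).
  move=> k l Hl.
  rewrite /grs_v; exact: (bigmin_le _ (Ordinal Hl) (fun l : 'I_(lk k) => f (c k l))).
have Hmin : forall k, Cs k x0.
  elim=> [|k IH]; first by rewrite H0.
  move: IH; rewrite Hun => -[l Hl Px].
  rewrite Hgood; exists l => //; split => //.
  have h1 := Lip _ _ Cx0 (Hcen' k l Hl).
  have h2 := Hdiam k l _ _ Hl Px (Hcen k l Hl).
  have h3 := vle k (leq_ltn_trans (leq0n l) Hl).
  have h4 : M0 * Defs.edist x0 (c k l) <= M0 * grs_delta lk P k.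
    by apply: ler_wpM2l.
  have h5 := ler_norm (f (c k l) - f x0).
  rewrite [_ * M0]mulrC; lra.
have Hkey : forall k x, Cs k.+1 x -> f x <= v + 3 * (M0 * grs_delta lk P k).
  move=> k x; rewrite Hgood => -[l [Hl Hgd] Px].
  have := Hmin k; rewrite Hun => -[l0 Hl0 Px0].
  have Cx : C x by apply: (Hsub k); apply: (Hpiece k l Hl).
  have h1 := Lip _ _ (Hcen' k l Hl) Cx.
  have h2 := Hdiam k l _ _ Hl (Hcen k l Hl) Px.
  have h4 : M0 * Defs.edist (c k l) x <= M0 * grs_delta lk P k.
    by apply: ler_wpM2l.
  have g1 := Lip _ _ Cx0 (Hcen' k l0 Hl0).
  have g2 := Hdiam k l0 _ _ Hl0 Px0 (Hcen k l0 Hl0).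
  have g4 : M0 * Defs.edist x0 (c k l0) <= M0 * grs_delta lk P k.
    by apply: ler_wpM2l.
  have g3 := gvle k l0 Hl0.
  have h5 := ler_norm (f x - f (c k l)).
  have g5 := ler_norm (f (c k l0) - f x0).
  rewrite [_ * M0]mulrC in Hgd; lra.
have Hval : forall x, (\bigcap_k Cs k) x -> f x = v.
  move=> x Hx; apply/eqP; rewrite eq_le; apply/andP; split; last first.
    by apply: Hv; apply: (Hsub 0%N); apply: Hx.
  rewrite leNgt; apply/negP => Hlt.
  pose e := (f x - v) / (3 * M0 + 1).
  have He : 0 < e by rewrite /e divr_gt0 //; lra.
  have Hee : (3 * M0 + 1) * e = f x - v.
    by rewrite /e mulrC divfK //; apply/negP => /eqP; lra.
  move: (Hcvg) => /cvgr_dist_lt/(_ e He) [N _ HN].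
  have hN := HN N (leqnn N); rewrite /= sub0r normrN in hN.
  have hd := ler_norm (grs_delta lk P N).
  have hk := Hkey N x (Hx N.+1 I).
  nra.
split; first by exists x0 => k _; apply: Hmin.
apply/seteqP; split => y.
  by move=> [x Hx <-]; rewrite /= (Hval x Hx).
by move=> /= ->; exists x0 => //; move=> k _; apply: Hmin.
Qed.
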